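(* Let $\Delta:\mathcal{H}\to\mathcal{H}\otimes\mathcal{H}$ be the unique algebra morphism from $(\mathcal{H},\cdot)$ to $(\mathcal{H}\otimes\mathcal{H},\cdot_\varepsilon)$ such that $\Delta\circ B^+=(\mathrm{Id}\otimes B^+ + B^+\otimes(\nu\circ\varepsilon))\circ\Delta$. Then $(\mathcal{H},\cdot,\Delta,\varepsilon)$ is an infinitesimal bialgebra, and it is graded by the weight, i.e. $\Delta(\mathcal{H}_n)\subseteq\bigoplus_{i+j=n}\mathcal{H}_i\otimes\mathcal{H}_j$ for all $n$.
   Context: Let $K$ be a field. A planar rooted tree is a rooted tree in which the children of every vertex are linearly ordered (left to right). A planar forest is a finite, possibly empty, sequence $t_1\cdots t_n$ of planar rooted trees; the empty forest is denoted $1$, and the weight of a forest is its number of vertices. $\mathcal{H}$ is the free associative unital $K$-algebra generated by the set of planar rooted trees; its monomials are the planar forests, which form a basis, and the product is concatenation. $\mathcal{H}_n$ is the span of forests of weight $n$. $B^+:\mathcal{H}\to\mathcal{H}$ is the linear map sending a forest $F$ to the tree obtained by grafting the roots of the trees of $F$ (in their order) on a new common root ($B^+(1)$ is the one-vertex tree). $\varepsilon:\mathcal{H}\to K$ is the algebra morphism with $\varepsilon(F)=\delta_{F,1}$ for forests $F$, and $\nu:K\to\mathcal{H}$, $\lambda\mapsto\lambda 1$. The product $\cdot_\varepsilon$ on $\mathcal{H}\otimes\mathcal{H}$ is $(a_1\otimes b_1)\cdot_\varepsilon(a_2\otimes b_2)=\varepsilon(a_2)\,a_1\otimes b_1b_2+\varepsilon(b_1)\,a_1a_2\otimes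 b_2-\varepsilon(a_2)\varepsilon(b_1)\,a_1\otimes b_2$; it is associative with unit $1\otimes 1$. Since $(\mathcal{H},B^+)$ is initial among algebras with a linear endomorphism, the algebra morphism $\Delta$ above exists and is unique. An infinitesimal bialgebra is an associative unital algebra $A$ with a coassociative counital coproduct $\Delta$ (counit $\varepsilon$) such that $\Delta(ab)=\Delta(a)(1\otimes b)+(a\otimes 1)\Delta(b)-a\otimes b$ for all $a,b\in A$. *)

(* Defs.v *)
From HB Require Import structures.
From mathcomp Require Import all_boot all_algebra.
From mathcomp Require Import finmap.
From mathcomp.multinomials Require Import monalg.

Set Implicit Arguments.
Unset Strict Implicit.
Unset Printing Implicit Defensive.
Import GRing.Theory.
Local Open Scope ring_scope.

Inductive tree : Type := Node of seq tree.

Fixpoint tree_enc (t : tree) : GenTree.tree unit :=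
  let: Node ts := t in GenTree.Node 0 (map tree_enc ts).
Fixpoint tree_dec (g : GenTree.tree unit) : tree :=
  match g with
  | GenTree.Leaf _ => Node [::]
  | GenTree.Node _ gs => Node (map tree_dec gs)
  end.
Fixpoint tree_encK (t : tree) : tree_dec (tree_enc t) = t :=
  match t with Node ts => f_equal Node
   ((fix F (s : seq tree) : map tree_dec (map tree_enc s) = s :=
      match s with
      | [::] => erefl
      | u :: s' => f_equal2 cons (tree_encK u) (F s')
      end) ts) end.
HB.instance Definition _ := Countable.copy tree (can_type tree_encK).

Definition forest := seq tree.
HB.instance Definition _ := Choice.on forest.

Lemma forest_unitm (x y : forest) : x ++ y = [::] -> x = [::] /\ y = [::].
Proof. by case: x => //; case: y. Qed.

HB.instance Definition _ := Choice_isMonomialDef.Build forest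
  (@catA tree) (@cat0s tree) (@cats0 tree) forest_unitm.

Fixpoint tweight (t : tree) : nat :=
  let: Node ts := t in (sumn (map tweight ts)).+1.
Definition fweight (F : forest) : nat := sumn (map tweight F).

(* H = free associative unital K-algebra on planar trees, i.e. the     *)
(* monoid algebra of the free monoid of forests (basis = forests).     *)
Definition H (K : fieldType) := {malg K[forest]}.
(* H (x) H, with basis the pairs of forests (F, G) standing for F (x) G *)
Definition H2 (K : fieldType) := {malg K[(forest * forest)%type]}.
Definition H3 (K : fieldType) := {malg K[(forest * forest * forest)%type]}.

Section Ops.
Variable K : fieldType.

Definition lext (A B : choiceType) (f : A -> {malg K[B]}) (g : {malg K[A]})
  : {malg K[B]} := \sum_(k <- msupp g) g@_k *: f k.

Definition fb (F : forest) : H K := << F >>.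

Definition Bplus (a : H K) : H K := lext (fun F : forest => fb [:: Node F]) a.

Definition eps (a : H K) : K := a@_[::].

Definition nu (c : K) : H K := c *: 1.

Definition tens (a b : H K) : H2 K :=
  \sum_(x <- msupp a) \sum_(y <- msupp b) (a@_x * b@_y) *: << (x, y) >>.

Definition bilext (f : forest * forest -> forest * forest -> H2 K)
  (u v : H2 K) : H2 K :=
  \sum_(k1 <- msupp u) \sum_(k2 <- msupp v) (u@_k1 * v@_k2) *: f k1 k2.

Definition mulE (u v : H2 K) : H2 K :=
  bilext (fun k1 k2 =>
    let: (a1, b1) := k1 in let: (a2, b2) := k2 in
    eps (fb a2) *: tens (fb a1) (fb b1 * fb b2)
    + eps (fb b1) *: tens (fb a1 * fb a2) (fb b2)
    - (eps (fb a2) * eps (fb b1)) *: tens (fb a1) (fb b2)) u v.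

Definition mulT (u v : H2 K) : H2 K :=
  bilext (fun k1 k2 =>
    let: (a1, b1) := k1 in let: (a2, b2) := k2 in
    tens (fb a1 * fb a2) (fb b1 * fb b2)) u v.

Definition IdBplus (u : H2 K) : H2 K :=
  lext (fun k : forest * forest => tens (fb k.1) (Bplus (fb k.2))) u.
Definition BplusNuEps (u : H2 K) : H2 K :=
  lext (fun k : forest * forest => tens (Bplus (fb k.1)) (nu (eps (fb k.2)))) u.

Definition DeltaId (D : H K -> H2 K) (u : H2 K) : H3 K :=
  lext (fun k : forest * forest =>
    lext (fun l : forest * forest => << (l.1, l.2, k.2) >>) (D (fb k.1))) u.
Definition IdDelta (D : H K -> H2 K) (u : H2 K) : H3 K :=
  lext (fun k : forest * forest =>
    lext (fun l : forest * forest => << (k.1, l.1, l.2) >>) (D (fb k.2))) u.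

(* eps (x) Id  and  Id (x) eps, using K (x) H = H = H (x) K *)
Definition EpsId (u : H2 K) : H K :=
  lext (fun k : forest * forest => eps (fb k.1) *: fb k.2) u.
Definition IdEps (u : H2 K) : H K :=
  lext (fun k : forest * forest => eps (fb k.2) *: fb k.1) u.

Definition DeltaSpec (D : {linear H K -> H2 K}) : Prop :=
  [/\ D 1 = tens 1 1,
      forall a b, D (a * b) = mulE (D a) (D b) &
      forall a, D (Bplus a) = IdBplus (D a) + BplusNuEps (D a)].

End Ops.

(* Main.v *)
Require Import Defs.
From HB Require Import structures.
From mathcomp Require Import all_boot all_algebra.
From mathcomp Require Import finmap.
From mathcomp.multinomials Require Import monalg.
Set Implicit Arguments.
Unset Strict Implicit.
Unset Printing Implicit Defensive.
Import GRing.Theory.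
Local Open Scope ring_scope.

Section Lext.
Variable K : fieldType.
Variables A B : choiceType.

Lemma lextEw (f : A -> {malg K[B]}) (g : {malg K[A]}) (d : {fset A}) :
  (msupp g `<=` d)%fset -> lext f g = \sum_(k <- d) g@_k *: f k.
Proof.
move=> le; rewrite /lext (big_fset_incl _ le) //= => x _ /mcoeff_outdom ->.
by rewrite scale0r.
Qed.

Lemma lext_is_linear (f : A -> {malg K[B]}) : linear (lext f).
Proof.
move=> c u v.
pose d := (msupp u `|` msupp v `|` msupp (c *: u + v))%fset.
have h1 : (msupp u `<=` d)%fset by rewrite /d -fsetUA fsubsetUl.
have h2 : (msupp v `<=` d)%fset.
  by rewrite /d -fsetUA fsubsetU // fsubsetUl orbT.
have h3 : (msupp (c *: u + v) `<=` d)%fset by rewrite /d fsubsetUr.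
rewrite (lextEw _ h1) (lextEw _ h2) (lextEw _ h3) scaler_sumr -big_split /=.
by apply: eq_bigr => k _; rewrite mcoeffD mcoeffZ scalerDl scalerA.
Qed.

HB.instance Definition _ (f : A -> {malg K[B]}) :=
  GRing.isLinear.Build K {malg K[A]} {malg K[B]} *:%R (lext f) (lext_is_linear f).

Lemma lextU (f : A -> {malg K[B]}) (c : K) (k : A) : lext f << c *g k >> = c *: f k.
Proof. by rewrite (lextEw _ msuppU_le) big_seq_fset1 mcoeffUU. Qed.

Lemma lextU1 (f : A -> {malg K[B]}) (k : A) : lext f << k >> = f k.
Proof. by rewrite lextU scale1r. Qed.

Lemma malgU_scale (c : K) (k : A) : << c *g k >> = c *: (<< k >> : {malg K[A]}).
Proof. by apply/malgP => k'; rewrite mcoeffZ !mcoeffU mulr_natr. Qed.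

Lemma lext_id (u : {malg K[A]}) : lext (fun k => << k >>) u = u.
Proof.
rewrite [RHS]monalgE /lext; apply: eq_bigr => k _; by rewrite malgU_scale.
Qed.

Lemma eq_lext (f g : A -> {malg K[B]}) : f =1 g -> lext f =1 lext g.
Proof. by move=> e u; rewrite /lext; apply: eq_bigr => k _; rewrite e. Qed.

Lemma lin_lext (phi : {linear {malg K[A]} -> {malg K[B]}}) u :
  phi u = lext (fun k => phi << k >>) u.
Proof.
rewrite -{1}(lext_id u) /lext linear_sum; apply: eq_bigr => k _.
by rewrite linearZ.
Qed.

Lemma lextD_fun (f g : A -> {malg K[B]}) u :
  lext (fun k => f k + g k) u = lext f u + lext g u.
Proof. by rewrite /lext -big_split; apply: eq_bigr => k _; rewrite scalerDr. Qed.
Lemma lextB_fun (f g : A -> {malg K[B]}) u :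
  lext (fun k => f k - g k) u = lext f u - lext g u.
Proof. by rewrite /lext -sumrB; apply: eq_bigr => k _; rewrite scalerBr. Qed.
Lemma lextZ_fun (f : A -> {malg K[B]}) (c : A -> K) u :
  lext (fun k => c k *: f k) u = lext (fun k => c k *: (f k)) u.
Proof. by []. Qed.
Lemma lext0_fun u : lext (fun k : A => (0 : {malg K[B]})) u = 0.
Proof. by rewrite /lext big1 // => k _; rewrite scaler0. Qed.

Lemma eq_lextP (f g : A -> {malg K[B]}) u : (forall k, f k = g k) -> lext f u = lext g u.
Proof. by move=> e; apply: eq_lext. Qed.

Lemma lextZl (f : A -> {malg K[B]}) (c : K) u :
  c *: lext f u = lext (fun k => c *: f k) u.
Proof. by rewrite /lext scaler_sumr; apply: eq_bigr => k _; rewrite !scalerA mulrC. Qed.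

Lemma lextN_fun (f : A -> {malg K[B]}) u :
  - lext f u = lext (fun k => - f k) u.
Proof. by rewrite -scaleN1r lextZl; apply: eq_lextP => k; rewrite scaleN1r. Qed.

Lemma lextZU (f : A -> {malg K[B]}) (c : K) (k : A) : lext f (c *: << k >>) = c *: f k.
Proof. by rewrite -malgU_scale lextU. Qed.

End Lext.

Lemma lext_comp (K : fieldType) (A B C : choiceType) (f : B -> {malg K[C]})
  (g : A -> {malg K[B]}) u :
  lext f (lext g u) = lext (fun k => lext f (g k)) u.
Proof.
by rewrite [lext g u]/lext linear_sum; apply: eq_bigr => k _; rewrite linearZ.
Qed.

Lemma lext_swap (K : fieldType) (A B C : choiceType) (f : A -> B -> {malg K[C]})
  (u : {malg K[A]}) (v : {malg K[B]}) :
  lext (fun k => lext (fun l => f k l) v) u = lext (fun l => lext (fun k => f k l) u) v.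
Proof.
rewrite /lext.
under eq_bigr => k _ do rewrite scaler_sumr.
rewrite exchange_big /=; apply: eq_bigr => l _; rewrite scaler_sumr.
by apply: eq_bigr => k _; rewrite !scalerA mulrC.
Qed.

Set Implicit Arguments.
Unset Strict Implicit.
Unset Printing Implicit Defensive.
Import GRing.Theory.
Local Open Scope ring_scope.

Section Ops2.
Variable K : fieldType.
Local Notation H := (H K).
Local Notation H2 := (H2 K).
Local Notation H3 := (H3 K).

Lemma one_H : (1 : H) = fb K [::].
Proof. by []. Qed.

Lemma mulHE (a b : H) : a * b = lext (fun x : forest => lext (fun y : forest => << (x ++ y : forest) >>) b) a.
Proof.
rewrite malgME /lext; apply: eq_bigr => x _; rewrite scaler_sumr.
by apply: eq_bigr => y _; rewrite malgU_scale scalerA.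
Qed.

Lemma fbM (x y : forest) : fb K x * fb K y = fb K (x ++ y).
Proof. by rewrite mulHE /fb !lextU1. Qed.

Lemma tensE (a b : H) : tens a b = lext (fun x : forest => lext (fun y : forest => << ((x, y) : forest * forest) >>) b) a.
Proof.
rewrite /tens /lext; apply: eq_bigr => x _; rewrite scaler_sumr.
by apply: eq_bigr => y _; rewrite scalerA.
Qed.

Lemma tensU (x y : forest) : tens (fb K x) (fb K y) = << ((x, y) : forest * forest) >>.
Proof. by rewrite tensE /fb !lextU1. Qed.

Lemma bilextE f (u v : H2) :
  bilext f u v = lext (fun k1 : forest * forest => lext (fun k2 : forest * forest => f k1 k2) v) u.
Proof.
rewrite /bilext /lext; apply: eq_bigr => x _; rewrite scaler_sumr.
by apply: eq_bigr => y _; rewrite scalerA.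
Qed.

Lemma epsU (x : forest) : eps (fb K x) = (x == [::])%:R.
Proof. by rewrite /eps /fb mcoeffU eq_sym. Qed.


Definition mEb (k1 k2 : forest * forest) : H2 :=
  let: (a1, b1) := k1 in let: (a2, b2) := k2 in
  (a2 == [::])%:R *: << ((a1, b1 ++ b2) : forest * forest) >> + (b1 == [::])%:R *: << ((a1 ++ a2, b2) : forest * forest) >>
  - ((a2 == [::])%:R * (b1 == [::])%:R) *: << ((a1, b2) : forest * forest) >>.

Lemma mulE_E (u v : H2) : mulE u v = lext (fun k1 : forest * forest => lext (fun k2 : forest * forest => mEb k1 k2) v) u.
Proof.
rewrite /mulE bilextE; apply: eq_lext => -[a1 b1]; apply: eq_lext => -[a2 b2].
by rewrite /mEb !fbM !tensU !epsU.
Qed.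

Definition r2 (u : H2) (F : forest) : H2 := lext (fun k : forest * forest => << ((k.1, k.2 ++ F) : forest * forest) >>) u.
Definition l1 (F : forest) (u : H2) : H2 := lext (fun k : forest * forest => << ((F ++ k.1, k.2) : forest * forest) >>) u.

Lemma mulT_r2 (u : H2) G : mulT u (tens 1 (fb K G)) = r2 u G.
Proof.
rewrite /mulT bilextE one_H tensU /r2; apply: eq_lext => -[a b].
by rewrite lextU1 !fbM cats0 tensU.
Qed.

Lemma mulT_l1 (v : H2) F : mulT (tens (fb K F) 1) v = l1 F v.
Proof.
rewrite /mulT bilextE one_H tensU lextU1 /l1; apply: eq_lext => -[a b].
by rewrite !fbM tensU.
Qed.

Lemma EpsIdE (u : H2) : EpsId u = lext (fun k : forest * forest => (k.1 == [::])%:R *: << k.2 >>) u.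
Proof. by rewrite /EpsId; apply: eq_lext => k; rewrite epsU. Qed.
Lemma IdEpsE (u : H2) : IdEps u = lext (fun k : forest * forest => (k.2 == [::])%:R *: << k.1 >>) u.
Proof. by rewrite /IdEps; apply: eq_lext => k; rewrite epsU. Qed.

Lemma M_identity (u v : H2) :
  mulE u v = mulT u (tens 1 (EpsId v)) + mulT (tens (IdEps u) 1) v
             - tens (IdEps u) (EpsId v).
Proof.
rewrite mulE_E /mulT !bilextE !tensE one_H lextU1 EpsIdE IdEpsE.
rewrite !lext_comp -lextD_fun -lextB_fun; apply: eq_lext => -[x1 y1] /=.
rewrite !linearZ /= !lextU1 !lext_comp lextN_fun !lextZl -!lextD_fun.
apply: eq_lextP => -[a2 b2] /=.
rewrite -!malgU_scale !lextU !linearZ /= !lextU1 !fbM !tensU cats0 /=.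
by rewrite !scalerN !scalerA -!malgU_scale.
Qed.
End Ops2.

Set Implicit Arguments.
Unset Strict Implicit.
Unset Printing Implicit Defensive.
Import GRing.Theory.
Local Open Scope ring_scope.

Definition forest_ind' (P : forest -> Prop) (h0 : P [::])
  (hT : forall G, P G -> P [:: Node G])
  (hC : forall t F, P [:: t] -> P F -> P (t :: F)) : forall F, P F :=
  fix IHF (F : forest) : P F :=
    match F with
    | [::] => h0
    | t :: F' => hC t F'
        ((fix IHt (t : tree) : P [:: t] :=
           let: Node G := t in hT G
             ((fix IHF2 (F : forest) : P F :=
                 match F with
                 | [::] => h0
                 | u :: F' => hC u F' (IHt u) (IHF2 F')
                 end) G)) t)
        (IHF F')
    end.

Section Delta.
Variable K : fieldType.
Local Notation H := (H K).
Local Notation H2 := (H2 K).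
Local Notation H3 := (H3 K).

Fixpoint dT0 (t : tree) : H2 :=
  let: Node G := t in
  let dG := (fix dF (F : forest) : H2 :=
     match F with
     | [::] => << (([::], [::]) : forest * forest) >>
     | u :: F' => r2 (dT0 u) F' + l1 [:: u] (dF F') - << (([:: u], F') : forest * forest) >>
     end) G in
  IdBplus dG + BplusNuEps dG.

Fixpoint dF0 (F : forest) : H2 :=
  match F with
  | [::] => << (([::], [::]) : forest * forest) >>
  | u :: F' => r2 (dT0 u) F' + l1 [:: u] (dF0 F') - << (([:: u], F') : forest * forest) >>
  end.

Fact dT_key : unit. Proof. by []. Qed.
Fact dF_key : unit. Proof. by []. Qed.
Definition dT := locked_with dT_key dT0.
Definition dF := locked_with dF_key dF0.
Canonical dT_unlockable := [unlockable fun dT].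
Canonical dF_unlockable := [unlockable fun dF].

Lemma dT_E G : dT (Node G) = IdBplus (dF G) + BplusNuEps (dF G).
Proof. by rewrite !unlock. Qed.

Lemma dF_cons t F : dF (t :: F) = r2 (dT t) F + l1 [:: t] (dF F) - << (([:: t], F) : forest * forest) >>.
Proof. by rewrite !unlock. Qed.

Lemma dF_nil : dF [::] = << (([::], [::]) : forest * forest) >>.
Proof. by rewrite unlock. Qed.

Lemma r2U (k : forest * forest) F : r2 (<< k >> : H2) F = << ((k.1, k.2 ++ F) : forest * forest) >>.
Proof. by rewrite /r2 lextU1. Qed.
Lemma l1U (k : forest * forest) F : l1 F (<< k >> : H2) = << ((F ++ k.1, k.2) : forest * forest) >>.
Proof. by rewrite /l1 lextU1. Qed.

Lemma r2_nil (u : H2) : r2 u [::] = u.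
Proof. by rewrite /r2 -[RHS]lext_id; apply: eq_lextP => -[x y] /=; rewrite cats0. Qed.
Lemma l1_nil (u : H2) : l1 [::] u = u.
Proof. by rewrite /l1 -[RHS]lext_id; apply: eq_lextP => -[x y]. Qed.

Lemma dF1 t : dF [:: t] = dT t.
Proof. by rewrite dF_cons r2_nil dF_nil l1U cats0 addrK. Qed.

Lemma IdBplus_E (u : H2) : IdBplus u = lext (fun k : forest * forest => << ((k.1, [:: Node k.2]) : forest * forest) >>) u.
Proof. by rewrite /IdBplus; apply: eq_lextP => -[x y]; rewrite /Bplus /fb lextU1 tensU. Qed.

Lemma BplusNuEps_E (u : H2) :
  BplusNuEps u = lext (fun k : forest * forest => (k.2 == [::])%:R *: << (([:: Node k.1], [::]) : forest * forest) >>) u.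
Proof.
rewrite /BplusNuEps; apply: eq_lextP => -[x y] /=.
rewrite epsU /nu /Bplus /fb lextU1 tensE lextU1 one_H.
by rewrite -malgU_scale lextU -malgU_scale.
Qed.


Opaque IdBplus BplusNuEps EpsId IdEps.

Lemma EpsId_r2 (u : H2) F : EpsId (r2 u F) = EpsId u * (<< F >> : H).
Proof.
rewrite !EpsIdE /r2 lext_comp mulHE lext_comp; apply: eq_lextP => -[x y] /=.
by rewrite lextU1 lextZU lextU1.
Qed.

Lemma EpsId_l1 t (v : H2) : EpsId (l1 [:: t] v) = 0.
Proof.
rewrite EpsIdE /l1 lext_comp -(lext0_fun _ v); apply: eq_lextP => -[x y].
by rewrite lextU1 /= scale0r.
Qed.

Lemma EpsId_U x y : EpsId (<< ((x, y) : forest * forest) >> : H2) = (x == [::])%:R *: << y >>.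
Proof. by rewrite EpsIdE lextU1. Qed.

Lemma EpsId_IdBplus (u : H2) : EpsId (IdBplus u) = Bplus (EpsId u).
Proof.
rewrite EpsIdE IdBplus_E lext_comp /Bplus EpsIdE lext_comp.
by apply: eq_lextP => -[x y]; rewrite lextU1 /= lextZU.
Qed.

Lemma EpsId_BNE (u : H2) : EpsId (BplusNuEps u) = 0.
Proof.
rewrite EpsIdE BplusNuEps_E lext_comp -(lext0_fun _ u); apply: eq_lextP => -[x y].
by rewrite lextZU /= scale0r scaler0.
Qed.

Lemma IdEps_r2 (u : H2) F : IdEps (r2 u F) = (F == [::])%:R *: IdEps u.
Proof.
rewrite !IdEpsE /r2 lext_comp lextZl; apply: eq_lextP => -[x y] /=.
rewrite lextU1 /= scalerA; congr (_ *: _).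
by case: y => [|? ?]; case: F => [|? ?]; rewrite /= ?mulr1 ?mulr0 ?mul0r.
Qed.

Lemma IdEps_l1 t (v : H2) : IdEps (l1 [:: t] v) = fb K [:: t] * IdEps v.
Proof.
rewrite !IdEpsE /l1 lext_comp mulHE lextU1 lext_comp; apply: eq_lextP => -[x y] /=.
by rewrite lextU1 lextZU.
Qed.

Lemma IdEps_U x y : IdEps (<< ((x, y) : forest * forest) >> : H2) = (y == [::])%:R *: << x >>.
Proof. by rewrite IdEpsE lextU1. Qed.

Lemma IdEps_IdBplus (u : H2) : IdEps (IdBplus u) = 0.
Proof.
rewrite IdEpsE IdBplus_E lext_comp -(lext0_fun _ u); apply: eq_lextP => -[x y].
by rewrite lextU1 /= scale0r.
Qed.

Lemma IdEps_BNE (u : H2) : IdEps (BplusNuEps u) = Bplus (IdEps u).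
Proof.
rewrite IdEpsE BplusNuEps_E lext_comp /Bplus IdEpsE lext_comp.
by apply: eq_lextP => -[x y]; rewrite !lextZU /= scale1r.
Qed.

Lemma EpsIdD (u v : H2) : EpsId (u + v) = EpsId u + EpsId v.
Proof. by rewrite !EpsIdE linearD. Qed.
Lemma EpsIdB (u v : H2) : EpsId (u - v) = EpsId u - EpsId v.
Proof. by rewrite !EpsIdE linearB. Qed.
Lemma IdEpsD (u v : H2) : IdEps (u + v) = IdEps u + IdEps v.
Proof. by rewrite !IdEpsE linearD. Qed.
Lemma IdEpsB (u v : H2) : IdEps (u - v) = IdEps u - IdEps v.
Proof. by rewrite !IdEpsE linearB. Qed.

Lemma dF_counit F : EpsId (dF F) = << F >> /\ IdEps (dF F) = << F >>.
Proof.
elim/forest_ind': F => [|G [IH1 IH2]|t F [IHt1 IHt2] [IH1 IH2]].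
- by rewrite dF_nil EpsId_U IdEps_U !eqxx !scale1r.
- rewrite dF1 dT_E EpsIdD IdEpsD; split.
    rewrite -[RHS]addr0; congr (_ + _); last exact: EpsId_BNE.
    by rewrite EpsId_IdBplus IH1 /Bplus /fb lextU1.
  rewrite -[RHS]add0r; congr (_ + _); first exact: IdEps_IdBplus.
  by rewrite IdEps_BNE IH2 /Bplus /fb lextU1.
- rewrite dF_cons -dF1 EpsIdB EpsIdD IdEpsB IdEpsD EpsId_r2 EpsId_l1 EpsId_U.
  rewrite IdEps_r2 IdEps_l1 IdEps_U ?IHt1 ?IHt2 ?IH1 ?IH2 /= scale0r subr0 addr0.
  split; first by rewrite fbM.
  by rewrite addrAC subrr add0r fbM.
Qed.

Lemma r2D (u v : H2) F : r2 (u + v) F = r2 u F + r2 v F.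
Proof. by rewrite /r2 linearD. Qed.
Lemma r2B (u v : H2) F : r2 (u - v) F = r2 u F - r2 v F.
Proof. by rewrite /r2 linearB. Qed.
Lemma l1D (u v : H2) F : l1 F (u + v) = l1 F u + l1 F v.
Proof. by rewrite /l1 linearD. Qed.
Lemma l1B (u v : H2) F : l1 F (u - v) = l1 F u - l1 F v.
Proof. by rewrite /l1 linearB. Qed.

Lemma r2_cat (u : H2) F G : r2 (r2 u F) G = r2 u (F ++ G).
Proof. by rewrite /r2 lext_comp; apply: eq_lextP => -[x y]; rewrite lextU1 /= catA. Qed.
Lemma r2_l1 (u : H2) F G : r2 (l1 F u) G = l1 F (r2 u G).
Proof. by rewrite /r2 /l1 !lext_comp; apply: eq_lextP => -[x y]; rewrite !lextU1. Qed.
Lemma l1_cat (u : H2) F G : l1 F (l1 G u) = l1 (F ++ G) u.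
Proof. by rewrite /l1 lext_comp; apply: eq_lextP => -[x y]; rewrite lextU1 /= catA. Qed.

Lemma zre (a b c d e : H2) : a + (b + c - d) - e = a + b - e + c - d.
Proof. by rewrite !addrA [a + b - e + c]addrAC [LHS]addrAC. Qed.

Lemma dF_cat F G : dF (F ++ G) = r2 (dF F) G + l1 F (dF G) - << ((F, G) : forest * forest) >>.
Proof.
elim: F => [|t F IH].
  by rewrite /= dF_nil r2U l1_nil /= addrAC subrr add0r.
rewrite cat_cons !dF_cons IH r2B r2D r2_cat r2_l1 r2U l1B l1D l1_cat l1U /=.
exact: zre.
Qed.

Lemma dF_mulE x y : mulE (dF x) (dF y) = dF (x ++ y).
Proof.
have [h1 _] := dF_counit y; have [_ h2] := dF_counit x.
by rewrite M_identity h1 h2 mulT_r2 mulT_l1 tensU dF_cat.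
Qed.

End Delta.

Set Implicit Arguments.
Unset Strict Implicit.
Unset Printing Implicit Defensive.
Import GRing.Theory.
Local Open Scope ring_scope.

Section Exist.
Variable K : fieldType.
Local Notation H := (H K).
Local Notation H2 := (H2 K).
Local Notation H3 := (H3 K).

Lemma EpsId_lext (f : forest -> H2) (a : H) : EpsId (lext f a) = lext (fun x => EpsId (f x)) a.
Proof. by rewrite EpsIdE lext_comp; apply: eq_lextP => x; rewrite EpsIdE. Qed.
Lemma IdEps_lext (f : forest -> H2) (a : H) : IdEps (lext f a) = lext (fun x => IdEps (f x)) a.
Proof. by rewrite IdEpsE lext_comp; apply: eq_lextP => x; rewrite IdEpsE. Qed.
Lemma IdBplus_lext (f : forest -> H2) (a : H) : IdBplus (lext f a) = lext (fun x => IdBplus (f x)) a.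
Proof. by rewrite IdBplus_E lext_comp; apply: eq_lextP => x; rewrite IdBplus_E. Qed.
Lemma BNE_lext (f : forest -> H2) (a : H) : BplusNuEps (lext f a) = lext (fun x => BplusNuEps (f x)) a.
Proof. by rewrite BplusNuEps_E lext_comp; apply: eq_lextP => x; rewrite BplusNuEps_E. Qed.

Lemma mulE_lext (f g : forest -> H2) (a b : H) :
  mulE (lext f a) (lext g b) = lext (fun x => lext (fun y => mulE (f x) (g y)) b) a.
Proof.
rewrite mulE_E lext_comp; apply: eq_lextP => x.
rewrite (eq_lextP (g := fun k1 : forest * forest => lext (fun y : forest => lext (@mEb K k1) (g y)) b)); last first.
  by move=> k1; rewrite lext_comp.
rewrite lext_swap; apply: eq_lextP => y; by rewrite mulE_E.
Qed.

Lemma counit_l (a : H) : EpsId (lext (@dF K) a) = a.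
Proof.
rewrite EpsId_lext -[RHS]lext_id; apply: eq_lextP => x; by case: (dF_counit K x).
Qed.
Lemma counit_r (a : H) : IdEps (lext (@dF K) a) = a.
Proof.
rewrite IdEps_lext -[RHS]lext_id; apply: eq_lextP => x; by case: (dF_counit K x).
Qed.

Lemma spec_exists : DeltaSpec (lext (@dF K) : {linear H -> H2}).
Proof.
split.
- by rewrite /= one_H /fb lextU1 dF_nil -/(fb K _) tensU.
- move=> a b /=; rewrite mulHE lext_comp mulE_lext; apply: eq_lextP => x.
  rewrite lext_comp; apply: eq_lextP => y; by rewrite lextU1 dF_mulE.
- move=> a /=; rewrite IdBplus_lext BNE_lext -lextD_fun /Bplus lext_comp.
  by apply: eq_lextP => x; rewrite /fb lextU1 dF1 dT_E.
Qed.

Lemma spec_unique (D : {linear H -> H2}) : DeltaSpec D -> forall a, D a = lext (@dF K) a.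
Proof.
case=> D1 DM DB.
have Db : forall F, D (fb K F) = dF K F.
  elim/forest_ind' => [|G IH|t F IHt IHF].
  - by rewrite -one_H D1 dF_nil one_H tensU.
  - have -> : fb K [:: Node G] = Bplus (fb K G) by rewrite /Bplus /fb lextU1.
    by rewrite DB IH dF1 dT_E.
  - by rewrite -(fbM K [:: t] F) DM IHt IHF dF_mulE.
move=> a; rewrite lin_lext; apply: eq_lextP => x; exact: Db.
Qed.

Lemma infinitesimal (D : {linear H -> H2}) : DeltaSpec D -> forall a b : H,
  D (a * b) = mulT (D a) (tens 1 b) + mulT (tens a 1) (D b) - tens a b.
Proof.
move=> sD a b; have [_ DM _] := sD.
by rewrite DM M_identity !(spec_unique sD) counit_l counit_r.
Qed.

End Exist.

Set Implicit Arguments.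
Unset Strict Implicit.
Unset Printing Implicit Defensive.
Import GRing.Theory.
Local Open Scope ring_scope.

Section Coass.
Variable K : fieldType.
Local Notation H := (H K).
Local Notation H2 := (H2 K).
Local Notation H3 := (H3 K).
Local Notation dF := (dF K).
Local Notation F3 := (forest * forest * forest)%type.
Local Notation F2 := (forest * forest)%type.

Definition Lc (u : H2) : H3 :=
  lext (fun k : F2 => lext (fun l : F2 => << ((l.1, l.2, k.2) : F3) >>) (dF k.1)) u.
Definition Rc (u : H2) : H3 :=
  lext (fun k : F2 => lext (fun l : F2 => << ((k.1, l.1, l.2) : F3) >>) (dF k.2)) u.
Definition r3 (w : H3) (F : forest) : H3 :=
  lext (fun m : F3 => << ((m.1.1, m.1.2, m.2 ++ F) : F3) >>) w.
Definition l13 (F : forest) (w : H3) : H3 :=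
  lext (fun m : F3 => << ((F ++ m.1.1, m.1.2, m.2) : F3) >>) w.
Definition mid (w v : H2) : H3 :=
  lext (fun l : F2 => lext (fun k : F2 => << ((l.1, l.2 ++ k.1, k.2) : F3) >>) v) w.
Definition t3l (F : forest) (v : H2) : H3 := lext (fun k : F2 => << ((F, k.1, k.2) : F3) >>) v.
Definition t3r (w : H2) (F : forest) : H3 := lext (fun k : F2 => << ((k.1, k.2, F) : F3) >>) w.
Definition iib (w : H3) : H3 := lext (fun m : F3 => << ((m.1.1, m.1.2, [:: Node m.2]) : F3) >>) w.

Lemma midE (w v : H2) : mid w v =
  lext (fun k : F2 => lext (fun l : F2 => << ((l.1, l.2 ++ k.1, k.2) : F3) >>) w) v.
Proof. exact: lext_swap. Qed.

Lemma DeltaId_Lc (u : H2) : DeltaId (lext dF) u = Lc u.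
Proof. by rewrite /DeltaId /Lc; apply: eq_lextP => k; rewrite /fb lextU1. Qed.
Lemma IdDelta_Rc (u : H2) : IdDelta (lext dF) u = Rc u.
Proof. by rewrite /IdDelta /Rc; apply: eq_lextP => k; rewrite /fb lextU1. Qed.

Lemma Lc_r2 (u : H2) F : Lc (r2 u F) = r3 (Lc u) F.
Proof.
rewrite /Lc /r2 /r3 !lext_comp; apply: eq_lextP => -[x y]; rewrite lextU1 lext_comp /=.
by apply: eq_lextP => -[p q]; rewrite lextU1.
Qed.

Lemma congr_ABC (M : zmodType) (a b c a' b' c' : M) :
  a = a' -> b = b' -> c = c' -> a + b - c = a' + b' - c'.
Proof. by move=> -> -> ->. Qed.
Lemma congr_AB (M : zmodType) (a b a' b' : M) : a = a' -> b = b' -> a + b = a' + b'.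
Proof. by move=> -> ->. Qed.

Lemma Lc_l1 t (v : H2) :
  Lc (l1 [:: t] v) = mid (dF [:: t]) v + l13 [:: t] (Lc v) - t3l [:: t] v.
Proof.
rewrite midE. rewrite /l13 /Lc /t3l /l1. rewrite [LHS]lext_comp.
rewrite [X in _ + X - _]lext_comp.
rewrite -lextD_fun -lextB_fun.
apply: eq_lextP => -[x y] /=.
rewrite [LHS]lextU1 /= dF_cons -dF1 [LHS]linearB [in X in X = _]linearD /=.
apply: congr_ABC.
- rewrite /r2 [LHS]lext_comp; by apply: eq_lextP => -[p q]; rewrite lextU1.
- rewrite /l1 [LHS]lext_comp [RHS]lext_comp; by apply: eq_lextP => -[p q]; rewrite !lextU1.
- by rewrite lextU1.
Qed.

Lemma Lc_U x F : Lc << ((x, F) : F2) >> = t3r (dF x) F.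
Proof. by rewrite /Lc lextU1. Qed.

Lemma Rc_r2 (u : H2) F : Rc (r2 u F) = r3 (Rc u) F + mid u (dF F) - t3r u F.
Proof.
rewrite /Rc /r2 /r3 /mid /t3r [LHS]lext_comp [X in _ = X + _ - _]lext_comp.
rewrite -lextD_fun -lextB_fun; apply: eq_lextP => -[x y] /=.
rewrite [LHS]lextU1 /= dF_cat [LHS]linearB [in X in X = _]linearD /=.
apply: congr_ABC.
- rewrite /r2 [LHS]lext_comp [RHS]lext_comp; by apply: eq_lextP => -[p q]; rewrite !lextU1.
- rewrite /l1 [LHS]lext_comp; by apply: eq_lextP => -[p q]; rewrite !lextU1.
- by rewrite lextU1.
Qed.

Lemma Rc_l1 t (v : H2) : Rc (l1 [:: t] v) = l13 [:: t] (Rc v).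
Proof.
rewrite /Rc /l1 /l13 [LHS]lext_comp [RHS]lext_comp; apply: eq_lextP => -[x y].
rewrite [LHS]lextU1 /= [RHS]lext_comp.
by apply: eq_lextP => -[p q]; rewrite lextU1.
Qed.

Lemma Rc_U x F : Rc << ((x, F) : F2) >> = t3l x (dF F).
Proof. by rewrite /Rc lextU1. Qed.

Lemma Lc_IdBplus (u : H2) : Lc (IdBplus u) = iib (Lc u).
Proof.
rewrite IdBplus_E /Lc /iib [LHS]lext_comp [RHS]lext_comp; apply: eq_lextP => -[x y].
rewrite [LHS]lextU1 /= [RHS]lext_comp.
by apply: eq_lextP => -[p q]; rewrite lextU1.
Qed.

Lemma dF_tree G : dF [:: Node G] = IdBplus (dF G) + << ((([:: Node G] : forest), ([::] : forest)) : F2) >>.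
Proof.
rewrite dF1 dT_E; apply: congr_AB => //.
have h := (dF_counit K G).2.
transitivity (lext (fun x : forest => << ((([:: Node x] : forest), ([::] : forest)) : F2) >>) (IdEps (dF G))).
  rewrite BplusNuEps_E IdEpsE [RHS]lext_comp; by apply: eq_lextP => -[p q]; rewrite lextZU.
by rewrite h lextU1.
Qed.

Lemma Rc_IdBplus (u : H2) : Rc (IdBplus u) = iib (Rc u) + t3r (IdBplus u) [::].
Proof.
rewrite IdBplus_E /Rc /iib /t3r [LHS]lext_comp [X in _ = X + _]lext_comp.
rewrite [X in _ = _ + X]lext_comp -lextD_fun; apply: eq_lextP => -[x y].
rewrite [LHS]lextU1 /= dF_tree [LHS]linearD; apply: congr_AB.
  rewrite IdBplus_E [LHS]lext_comp [RHS]lext_comp.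
  by apply: eq_lextP => -[p q]; rewrite !lextU1.
by rewrite [LHS]lextU1 [RHS]lextU1.
Qed.

Lemma LcD (u v : H2) : Lc (u + v) = Lc u + Lc v. Proof. by rewrite /Lc linearD. Qed.
Lemma LcB (u v : H2) : Lc (u - v) = Lc u - Lc v. Proof. by rewrite /Lc linearB. Qed.
Lemma RcD (u v : H2) : Rc (u + v) = Rc u + Rc v. Proof. by rewrite /Rc linearD. Qed.
Lemma RcB (u v : H2) : Rc (u - v) = Rc u - Rc v. Proof. by rewrite /Rc linearB. Qed.
Lemma t3rD (u v : H2) F : t3r (u + v) F = t3r u F + t3r v F. Proof. by rewrite /t3r linearD. Qed.

Lemma zre3 (a b c d e : H3) : a + (b + c - d) - e = a + b - e + c - d.
Proof. by rewrite !addrA [a + b - e + c]addrAC [LHS]addrAC. Qed.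

Lemma coass_dF F : Lc (dF F) = Rc (dF F).
Proof.
elim/forest_ind': F => [|G IH|t F IHt IHF].
- by rewrite dF_nil Lc_U Rc_U dF_nil /t3r /t3l !lextU1.
- rewrite dF_tree LcD RcD Lc_IdBplus Rc_IdBplus IH Lc_U Rc_U dF_tree dF_nil t3rD.
  by rewrite /t3l /t3r !lextU1 addrA.
- rewrite dF_cons -dF1 LcB LcD RcB RcD Lc_r2 Lc_l1 Rc_r2 Rc_l1 Lc_U Rc_U IHt IHF.
  exact: zre3.
Qed.

End Coass.

Set Implicit Arguments.
Unset Strict Implicit.
Unset Printing Implicit Defensive.
Import GRing.Theory.
Local Open Scope ring_scope.

Lemma msupp_lext (K : fieldType) (A B : choiceType) (f : A -> {malg K[B]}) u k :
  k \in msupp (lext f u) -> exists2 x, x \in msupp u & k \in msupp (f x).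
Proof.
rewrite -mcoeff_neq0 /lext raddf_sum /=.
case: (boolP (has (fun x => k \in msupp (f x)) (msupp u))) => [/hasP [x hx h] _|/hasPn h].
  by exists x.
rewrite big1_seq ?eqxx // => x /andP [_ /h]; rewrite mcoeffZ -mcoeff_eq0 => /eqP ->.
by rewrite mulr0.
Qed.

Section Grad.
Variable K : fieldType.
Local Notation H := (H K).
Local Notation H2 := (H2 K).
Local Notation dF := (dF K).
Local Notation F2 := (forest * forest)%type.

Definition w2 (k : F2) := (fweight k.1 + fweight k.2)%N.
Definition homog n (u : H2) := forall k, k \in msupp u -> w2 k = n.

Lemma homog_lext (A : choiceType) n (f : A -> H2) (u : {malg K[A]}) :
  (forall x, x \in msupp u -> homog n (f x)) -> homog n (lext f u).
Proof. by move=> h k /msupp_lext [x hx hk]; exact: (h x hx k hk). Qed.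

Lemma homogD n (u v : H2) : homog n u -> homog n v -> homog n (u + v).
Proof.
move=> hu hv k /(fsubsetP (msuppD_le u v)); rewrite in_fsetU => /orP [] ?; auto.
Qed.
Lemma homogB n (u v : H2) : homog n u -> homog n v -> homog n (u - v).
Proof.
move=> hu hv k /(fsubsetP (msuppB_le u v)); rewrite in_fsetU => /orP [] ?; auto.
Qed.
Lemma homogU n (k : F2) : w2 k = n -> homog n << k >>.
Proof. by move=> hk k' /(fsubsetP msuppU_le); rewrite in_fset1 => /eqP ->. Qed.
Lemma homog0 n : homog n 0.
Proof. by move=> k; rewrite msupp0 in_fset0. Qed.
Lemma homogZ n c (u : H2) : homog n u -> homog n (c *: u).
Proof. by move=> hu k /(fsubsetP (msuppZ_le c u)); apply: hu. Qed.

Lemma fweight_cat F G : fweight (F ++ G) = (fweight F + fweight G)%N.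
Proof. by rewrite /fweight map_cat sumn_cat. Qed.
Lemma fweight_cons t F : fweight (t :: F) = (tweight t + fweight F)%N.
Proof. by []. Qed.
Lemma fweight_tree G : fweight [:: Node G] = (fweight G).+1.
Proof. by rewrite /fweight /= addn0. Qed.

Lemma dF_homog F : homog (fweight F) (dF F).
Proof.
elim/forest_ind': F => [|G IH|t F IHt IHF].
- by rewrite dF_nil; apply: homogU.
- have -> : dF [:: Node G] = IdBplus (dF G) + << ((([:: Node G] : forest), ([::] : forest)) : F2) >>.
    rewrite dF1 dT_E; congr (_ + _).
    have h := (dF_counit K G).2.
    transitivity (lext (fun x : forest => << ((([:: Node x] : forest), ([::] : forest)) : F2) >>) (IdEps (dF G))).
      rewrite BplusNuEps_E IdEpsE lext_comp; by apply: eq_lextP => -[p q]; rewrite lextZU.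
    by rewrite h lextU1.
  apply: homogD; last by apply: homogU; rewrite /w2 /=; change (fweight [::]) with 0%N; rewrite addn0.
  rewrite IdBplus_E; apply: homog_lext => -[x y] /IH hx; apply: homogU.
  by move: hx; rewrite /w2 /= !fweight_tree addnS => ->.
- rewrite dF_cons -dF1; apply: homogB; [apply: homogD|].
  + rewrite /r2; apply: homog_lext => -[x y] /IHt hx; apply: homogU.
    by move: hx; rewrite /w2 /= fweight_cat addnA => ->; rewrite -fweight_cat.
  + rewrite /l1; apply: homog_lext => -[x y] /IHF hx; apply: homogU.
    by move: hx; rewrite /w2 /= !fweight_cons -addnA => ->.
  + apply: homogU; rewrite /w2 /= !fweight_cons.
    by change (fweight [::]) with 0%N; rewrite addn0.
Qed.

End Grad.


Unset Implicit Arguments.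
Set Strict Implicit.
Set Printing Implicit Defensive.
Local Open Scope ring_scope.

Theorem theorem9 (K : fieldType) :
  (exists D : {linear H K -> H2 K}, DeltaSpec D) /\
  (forall D : {linear H K -> H2 K}, DeltaSpec D ->
    (* coassociativity *)
    (forall a : H K, DeltaId D (D a) = IdDelta D (D a)) /\
    (* counit *)
    (forall a : H K, EpsId (D a) = a /\ IdEps (D a) = a) /\
    (* infinitesimal compatibility *)
    (forall a b : H K,
       D (a * b) = mulT (D a) (tens 1 b) + mulT (tens a 1) (D b) - tens a b) /\
    (* graded by the weight *)
    (forall (n : nat) (a : H K),
       (forall F, F \in msupp a -> fweight F = n) ->
       forall k, k \in msupp (D a) -> (fweight k.1 + fweight k.2)%N = n)).
Proof.
split; first by exists (lext (@dF K) : {linear H K -> H2 K}); exact: spec_exists.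
move=> D sD; have Dl := spec_unique sD.
split; [|split; [|split]].
- move=> a.
  have eL : DeltaId D (D a) = DeltaId (lext (@dF K)) (D a).
    by rewrite /DeltaId; apply: eq_lextP => k; rewrite Dl.
  have eR : IdDelta D (D a) = IdDelta (lext (@dF K)) (D a).
    by rewrite /IdDelta; apply: eq_lextP => k; rewrite Dl.
  rewrite eL eR. rewrite Dl. rewrite DeltaId_Lc IdDelta_Rc. rewrite /Lc /Rc [LHS]lext_comp [RHS]lext_comp.
  apply: eq_lextP => x; exact: (coass_dF K x).
- by move=> a; rewrite Dl counit_l counit_r.
- exact: infinitesimal.
- move=> n a ha k; rewrite Dl => hk.
  apply: (homog_lext _ hk) => x /ha <-; exact: dF_homog.
Qed.
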